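(* Let $\mathcal X=\mathcal X_1\times\cdots\times\mathcal X_b$, $\mathcal X_i=\mathbb R^{m_i\times n_i}$ with trace inner product and norms $\|\cdot\|_{(i)}$ (dual $\|\cdot\|_{(i)\star}$), $f$ continuously differentiable with $f\ge f^\star$, $\mathcal D$ a distribution on subsets of $[b]$, and assume constants $L^0_{i,S},L^1_{i,S}\ge0$ exist such that for all $S\in\operatorname{supp}(\mathcal D)$, $X\in\mathcal X$ and $\Gamma$ with $\Gamma_i=0$ for $i\notin S$: $f(X+\Gamma)-f(X)-\langle\nabla f(X),\Gamma\rangle\le\sum_{i\in S}\frac{L^0_{i,S}+L^1_{i,S}\|\nabla_if(X)\|_{(i)\star}}2\|\Gamma_i\|_{(i)}^2$. Let $S\in\operatorname{supp}(\mathcal D)$. Then for all $X\in\mathcal X$, $$\sum_{i\in S}\frac{\|\nabla_if(X)\|_{(i)\star}^2}{2\left(L^0_{i,S}+L^1_{i,S}\|\nabla_if(X)\|_{(i)\star}\right)}\le f(X)-f^\star.$$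
   Context: $\operatorname{supp}(\mathcal D)$ is the set of subsets of $[b]$ with positive probability under $\mathcal D$. *)

(* Defs.v *)
From mathcomp Require Import all_boot all_order all_algebra.
From mathcomp Require Import classical_sets reals.
Set Implicit Arguments. Unset Strict Implicit. Unset Printing Implicit Defensive.
Import Order.TTheory GRing.Theory Num.Theory.
Local Open Scope ring_scope.
Local Open Scope classical_set_scope.

Section Defs.
Variable R : realType.

Definition blockT (b : nat) (m n : 'I_b -> nat) :=
  forall i : 'I_b, 'M[R]_(m i, n i).

Definition mx_ip (p q : nat) (A B : 'M[R]_(p, q)) : R := \tr (A^T *m B).

Definition badd b m n (X Y : @blockT b m n) : blockT m n := fun i => X i + Y i.

Definition bip b m n (X Y : @blockT b m n) : R := \sum_(i < b) mx_ip (X i) (Y i).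

(* Euclidean (Frobenius) norm on the product space, used only for the topology
   (all norms are equivalent in finite dimension). *)
Definition bfrob b m n (X : @blockT b m n) : R := Num.sqrt (bip X X).

Definition is_norm (p q : nat) (N : 'M[R]_(p, q) -> R) : Prop :=
  [/\ forall x, 0 <= N x,
      forall x, N x = 0 -> x = 0,
      forall (a : R) x, N (a *: x) = `|a| * N x
    & forall x y, N (x + y) <= N x + N y].

Definition dual_norm (p q : nat) (N : 'M[R]_(p, q) -> R) (G : 'M[R]_(p, q)) : R :=
  sup [set mx_ip G Y | Y in [set Y | N Y <= 1]].

Definition has_gradient b m n (f : @blockT b m n -> R) (gradf : blockT m n -> blockT m n) :=
  forall X (eps : R), 0 < eps -> exists2 delta : R, 0 < delta &
    forall G : blockT m n, bfrob G < delta ->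
      `|f (badd X G) - f X - bip (gradf X) G| <= eps * bfrob G.

Definition continuous_grad b m n (gradf : @blockT b m n -> blockT m n) :=
  forall X (eps : R), 0 < eps -> exists2 delta : R, 0 < delta &
    forall Y : blockT m n, bfrob (badd Y (fun i => - X i)) < delta ->
      bfrob (badd (gradf Y) (fun i => - gradf X i)) < eps.

Definition is_distr b (D : {set 'I_b} -> R) : Prop :=
  (forall S, 0 <= D S) /\ \sum_(S : {set 'I_b}) D S = 1.

Definition in_supp b (D : {set 'I_b} -> R) (S : {set 'I_b}) : Prop := 0 < D S.

End Defs.

(* Main.v *)
Require Import Defs.
From mathcomp Require Import all_boot all_order all_algebra.
From mathcomp Require Import classical_sets reals.
From Stdlib Require Import ClassicalEpsilon.
From mathcomp Require Import ring lra.
Import Order.TTheory GRing.Theory Num.Theory.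
Local Open Scope ring_scope.

Lemma ip_scale (R : realType) p q (A B : 'M[R]_(p, q)) (t : R) :
  mx_ip A (t *: B) = t * mx_ip A B.
Proof. by rewrite /mx_ip -scalemxAr linearZ. Qed.

Lemma ip_0 (R : realType) p q (A : 'M[R]_(p, q)) : mx_ip A 0 = 0.
Proof. by rewrite /mx_ip mulmx0 linear0. Qed.

Lemma norm_0 (R : realType) p q (N : 'M[R]_(p, q) -> R) : is_norm N -> N 0 = 0.
Proof.
case=> _ _ hZ _; have := hZ 0 0; rewrite scale0r normr0 mul0r; exact.
Qed.

Lemma dual_ge0 (R : realType) p q (N : 'M[R]_(p, q) -> R) G :
  is_norm N -> 0 <= dual_norm N G.
Proof.
move=> hN; rewrite /dual_norm.
set E := (X in sup X).
have E0 : E 0 by exists 0; [rewrite /= norm_0 // ler01 | exact: ip_0].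
have [hs|nhs] := boolp.pselect (has_sup E).
  exact: (sup_upper_bound hs).
by rewrite sup_out.
Qed.

Lemma dual_approx (R : realType) p q (N : 'M[R]_(p, q) -> R) G (e : R) :
  is_norm N -> 0 < e -> exists Y, N Y <= 1 /\ dual_norm N G - e <= mx_ip G Y.
Proof.
move=> hN he; rewrite /dual_norm.
set E := (X in sup X).
have [hs|nhs] := boolp.pselect (has_sup E).
  have [x [Y /= HY <-] hlt] := sup_adherent he hs.
  by exists Y; split => //; apply: ltW.
exists 0; split; first by rewrite norm_0 // ler01.
by rewrite sup_out // ip_0 sub0r lerNl oppr0 ltW.
Qed.

Lemma key (R : realType) (L d : R) : 0 <= L ->
  L * (d / L) ^+ 2 / 2 = d ^+ 2 / (2 * L) /\ d / L * d = 2 * (d ^+ 2 / (2 * L)).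
Proof.
move=> hL; have [->|hL0] := eqVneq L 0.
  by rewrite !(invr0, mulr0, mul0r).
split; field; by rewrite hL0.
Qed.

Theorem lemma11 (R : realType) (b : nat) (m n : 'I_b -> nat)
  (N : forall i : 'I_b, 'M[R]_(m i, n i) -> R)
  (f : blockT R m n -> R) (gradf : blockT R m n -> blockT R m n) (fstar : R)
  (D : {set 'I_b} -> R) (L0 L1 : 'I_b -> {set 'I_b} -> R) :
  (forall i, is_norm (N i)) ->
  has_gradient f gradf -> continuous_grad gradf ->
  (forall X, fstar <= f X) ->
  is_distr D ->
  (forall i S, 0 <= L0 i S) -> (forall i S, 0 <= L1 i S) ->
  (forall S, in_supp D S -> forall (X G : blockT R m n),
     (forall i, i \notin S -> G i = 0) ->
     f (badd X G) - f X - bip (gradf X) G <=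
       \sum_(i in S) (L0 i S + L1 i S * dual_norm (N i) (gradf X i)) / 2
                       * N i (G i) ^+ 2) ->
  forall S, in_supp D S -> forall X : blockT R m n,
    \sum_(i in S) dual_norm (N i) (gradf X i) ^+ 2
        / (2 * (L0 i S + L1 i S * dual_norm (N i) (gradf X i)))
      <= f X - fstar.
Proof.
move=> hN _ _ hfs _ hL0 hL1 hsm S hS X.
set d := fun i => dual_norm (N i) (gradf X i).
set Lm := fun i => L0 i S + L1 i S * d i.
set t := fun i => d i / Lm i.
have d0 : forall i, 0 <= d i by move=> i; exact: dual_ge0.
have Lm0 : forall i, 0 <= Lm i by move=> i; rewrite addr_ge0 ?mulr_ge0.
have t0 : forall i, 0 <= t i by move=> i; rewrite divr_ge0.
set A := \sum_(i in S) _.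
set B := \sum_(i in S) t i.
have B0 : 0 <= B by apply: sumr_ge0.
have main : forall e, 0 < e -> A - e * B <= f X - fstar.
  move=> e he.
  have hY : forall i, exists Y, N i Y <= 1 /\ d i - e <= mx_ip (gradf X i) Y.
    by move=> i; apply: dual_approx.
  pose Y := fun i => proj1_sig (constructive_indefinite_description _ (hY i)).
  have HY : forall i, N i (Y i) <= 1 /\ d i - e <= mx_ip (gradf X i) (Y i).
    by move=> i; rewrite /Y; case: constructive_indefinite_description.
  pose G : blockT R m n := fun i => if i \in S then (- t i) *: Y i else 0.
  have hG : forall i, i \notin S -> G i = 0 by move=> i /negbTE hi; rewrite /G hi.
  have := hsm S hS X G hG.
  have -> : bip (gradf X) G = - \sum_(i in S) t i * mx_ip (gradf X i) (Y i).
    rewrite -sumrN /bip [RHS]big_mkcond /=; apply: eq_bigr => i _.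
    by rewrite /G; case: (i \in S); rewrite ?ip_scale ?ip_0 ?mulNr ?oppr0.
  move=> H.
  have H2 : A - e * B <= \sum_(i in S) t i * mx_ip (gradf X i) (Y i)
      - \sum_(i in S) Lm i / 2 * N i (G i) ^+ 2.
    rewrite /A /B mulr_sumr -!sumrB; apply: ler_sum => i hi.
    rewrite /G hi.
    have [hZ1 hZ2] := HY i.
    have [_ _ hsc _] := hN i.
    rewrite hsc normrN ger0_norm // exprMn mulrA.
    have [k1 k2] := @key _ (Lm i) (d i) (Lm0 i).
    have nY0 : 0 <= N i (Y i) by have [] := hN i.
    have h3 : Lm i / 2 * t i ^+ 2 * N i (Y i) ^+ 2 <= d i ^+ 2 / (2 * Lm i).
      rewrite -k1 -/(t i).
      have c0 : 0 <= Lm i / 2 * t i ^+ 2 by rewrite mulr_ge0 ?exprn_ge0 ?mulr_ge0 ?invr_ge0.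
      have hN2 : N i (Y i) ^+ 2 <= 1 by rewrite expr_le1.
      apply: le_trans (ler_wpM2l c0 hN2) _; rewrite mulr1 [X in _ <= X]mulrAC //.
    have h4 : t i * (d i - e) <= t i * mx_ip (gradf X i) (Y i).
      by apply: ler_wpM2l.
    have h5 : t i * d i = 2 * (d i ^+ 2 / (2 * Lm i)) by rewrite -k2.
    rewrite /d in h5 h3 h4 *; rewrite /t /Lm /d in h5 h3 h4 *.
    set u := _ / (2 * _) in h5 h3 *. lra.
  move: H H2; rewrite /Lm /d /=; have := hfs (badd X G). move=> h1 h2 h3; set P := \sum_(i in S) t i * _ in h2 h3; set Q := \sum_(i in S) _ / 2 * _ in h2 h3; set F := f (badd X G) in h1 h2. clearbody P Q F A B. lra.
apply/ler_addgt0Pr => e he.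
have hB1 : 0 < B + 1 by rewrite ltr_wpDl.
have := main (e / (B + 1)) (divr_gt0 he hB1).
have : e / (B + 1) * B <= e.
  rewrite mulrAC ler_pdivrMr // ler_pM2l //. lra.
lra.
Qed.
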